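(* Let $V$ be an $\hbar$-adic nonlocal vertex algebra and let $u,v\in V$, $c^{(r)}\in V$ ($r\in\mathbb N$) with $\lim_{r\to\infty}c^{(r)}=0$ $\hbar$-adically, and $\beta(x),f(x),g(x)\in\mathbb{C}((x))[[\hbar]]$, such that $$Y(u,x_1)Y(v,x_2)-\beta(x_2-x_1)Y(v,x_2)Y(u,x_1)=f(x_1-x_2)+g(x_2-x_1)+\sum_{r\ge0}Y(c^{(r)},x_2)\frac{1}{r!}\Big(\frac{\partial}{\partial x_2}\Big)^rx_1^{-1}\delta\Big(\frac{x_2}{x_1}\Big).$$ Then $$Y(u,x_1)Y(v,x_2)\sim\beta(x_2-x_1)Y(v,x_2)Y(u,x_1)+f(-x_2+x_1)+g(x_2-x_1)$$ and $$Y(u,x)^-v=f(x)^-{\bf 1}+\sum_{r\ge0}c^{(r)}x^{-r-1}.$$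
   Context: An $\hbar$-adic nonlocal vertex algebra is a topologically free $\mathbb{C}[[\hbar]]$-module $V$ (i.e. isomorphic to $V_0[[\hbar]]$) with ${\bf 1}\in V$ and a $\mathbb{C}[[\hbar]]$-linear $Y(\cdot,x):V\to(\mathrm{End}V)[[x^{\pm1}]]$, $Y(v,x)=\sum v_nx^{-n-1}$, such that reductions mod $\hbar^n$ of $Y(u,x)w$ lie in $(V/\hbar^nV)((x))$, $Y({\bf 1},x)=1$, $Y(v,x){\bf 1}\in V[[x]]$ with constant term $v$, and for $u,v,w$ and each $n\ge1$ there is $l$ with $(z+y)^lY(u,z+y)Y(v,y)w\equiv(z+y)^lY(Y(u,z)v,y)w$ mod $\hbar^nV[[z^{\pm1},y^{\pm1}]]$. Conventions: $\delta(x)=\sum_{n\in\mathbb Z}x^n$; a scalar series $h(x)$ placed in an operator identity means $h\cdot\mathrm{id}_V$; $f(x_1-x_2)$ is expanded in nonnegative powers of $x_2$, while $f(-x_2+x_1)$, $g(x_2-x_1)$ and $\beta(x_2-x_1)$ are expanded in nonnegative powers of $x_1$. For $F,G\in(\mathrm{End}V)[[x_1^{\pm1},x_2^{\pm1}]]$, $F\sim G$ means: for every $n\ge1$ there is $k\ge0$ with $(x_1-x_2)^kF\equiv(x_1-x_2)^kG$ modulo $\hbar^n(\mathrm{End}V)[[x_1^{\pm1},x_2^{\pm1}]]$. $Y(u,x)^-=\sum_{n\ge0}u_nx^{-n-1}$ and, for $f(x)=\sum_nf_nx^n\in\mathbb{C}((x))[[\hbar]]$, $f(x)^-=\sum_{n<0}f_nx^n$.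 *)

(* Defs.v *)
(* Scalars: C = R[i] (complex numbers over a realType R),
   hbar-adic modules modelled as V0[[hbar]] = nat -> V0. *)
From Stdlib Require Import ClassicalEpsilon.
From mathcomp Require Import all_boot all_order all_algebra.
From mathcomp Require Import reals.
From mathcomp Require Export complex.

Set Implicit Arguments.
Unset Strict Implicit.
Unset Printing Implicit Defensive.

Import Order.TTheory GRing.Theory Num.Theory.
Local Open Scope ring_scope.

(* generalized binomial coefficient  binom(n, r) for n : int *)
Definition zbin (n : int) (r : nat) : int :=
  match n with
  | Posz m => ('C(m, r))%:Z
  | Negz m => (-1) ^+ r * ('C(m + r, r))%:Z
  end.

Section HbarAdic.
Variables (K : fieldType) (V0 : lmodType K).

(* C[[hbar]] : coefficient j of hbar^j *)
Definition hser := nat -> K.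
(* V = V0[[hbar]] (topologically free) : coefficient m of hbar^m *)
Definition hvec := nat -> V0.

Definition hzero : hvec := fun _ => 0.
Definition hadd (v w : hvec) : hvec := fun m => v m + w m.
Definition hsub (v w : hvec) : hvec := fun m => v m - w m.
Definition hscale (a : hser) (v : hvec) : hvec :=
  fun m => \sum_(i < m.+1) a i *: v (m - i)%N.
Definition kscale (c : K) (v : hvec) : hvec := fun m => c *: v m.

(* v \in hbar^N V *)
Definition modh (N : nat) (v : hvec) : Prop := forall m, (m < N)%N -> v m = 0.
Definition hcong (N : nat) (v w : hvec) : Prop := forall m, (m < N)%N -> v m = w m.

Definition hlim0 (c : nat -> hvec) : Prop :=
  forall N : nat, exists r0 : nat, forall r, (r0 <= r)%N -> modh N (c r).

(* A family s is
   hbar-adically summable iff each hbar-coefficient has finite support;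
   the sum is then computed coefficientwise (junk value otherwise). *)
Definition hsumZ (s : int -> hvec) : hvec := fun m =>
  epsilon (inhabits (0 : V0)) (fun t => exists N : nat,
     (forall i : int, (N < `|i|)%N -> s i m = 0) /\
     t = \sum_(i < N.*2.+1) s (i%:Z - N%:Z) m).

Definition hsumN (s : nat -> hvec) : hvec :=
  hsumZ (fun i : int => match i with Posz r => s r | Negz _ => hzero end).

Definition hlinear (F : hvec -> hvec) : Prop :=
  (forall v w, F (hadd v w) = hadd (F v) (F w)) /\
  (forall a v, F (hscale a v) = hscale a (F v)).

(* Vertex operator Y(v,x) = sum_n v_n x^{-n-1} is encoded as Y v n = v_n. *)
Definition vop := hvec -> int -> hvec -> hvec.

(* coefficient of z^a y^b in Y(u,z+y) Y(v,y) w, (z+y)^{-n-1} expanded in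
   nonnegative powers of y *)
Definition YzyY (Y : vop) (u v w : hvec) (a b : int) : hvec :=
  hsumZ (fun j : int => if (0 <= j)%R then
     kscale ((zbin (a + j) `|j|)%:~R) (Y u (- a - j - 1) (Y v (j - b - 1) w))
   else hzero).

(* coefficient of z^a y^b in (z+y)^l H(z,y), H given by its coefficients *)
Definition mul_zy (l : nat) (H : int -> int -> hvec) (a b : int) : hvec :=
  fun m => \sum_(t < l.+1) ('C(l, t)%:R : K) *: H (a - (l - t)%:Z) (b - t%:Z) m.

(* coefficient of x1^a x2^b in (x1-x2)^k H(x1,x2) *)
Definition mul_x12 (k : nat) (H : int -> int -> hvec) (a b : int) : hvec :=
  fun m => \sum_(t < k.+1)
     (('C(k, t)%:R : K) * (-1) ^+ t) *: H (a - (k - t)%:Z) (b - t%:Z) m.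

Definition hNVA (vac : hvec) (Y : vop) : Prop :=
  (forall u u' n w, Y (hadd u u') n w = hadd (Y u n w) (Y u' n w)) /\
  (forall a u n w, Y (hscale a u) n w = hscale a (Y u n w)) /\
  (forall u n, hlinear (Y u n)) /\
  (* reductions mod hbar^N of Y(u,x)w lie in (V/hbar^N V)((x)) *)
  (forall u w (N : nat), exists n0 : int, forall n, n0 <= n -> modh N (Y u n w)) /\
  (forall n w, Y vac n w = if n == -1 then w else hzero) /\
  (forall v, Y v (-1) vac = v /\ forall n : int, 0 <= n -> Y v n vac = hzero) /\
  (* weak associativity *)
  (forall u v w (N : nat), exists l : nat, forall a b : int,
     hcong N (mul_zy l (YzyY Y u v w) a b)
             (mul_zy l (fun a' b' => Y (Y u (- a' - 1) v) (- b' - 1) w) a b)).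

(* Elements of C((x))[[hbar]] : phi j k = coefficient of hbar^j x^k *)
Definition lser := nat -> int -> K.
Definition is_lser (phi : lser) : Prop :=
  forall j : nat, exists L : int, forall k : int, k < L -> phi j k = 0.

Definition sgnz (b : bool) (n : int) : K := if b && odd `|n| then -1 else 1.

(* coefficient of hbar^j X^a Y^i in phi((-1)^nX X + (-1)^nY Y), expanded in
   nonnegative powers of Y *)
Definition expc (phi : lser) (nX nY : bool) (j : nat) (a i : int) : K :=
  if (0 <= i)%R then phi j (a + i) * (zbin (a + i) `|i|)%:~R * sgnz nX a * sgnz nY i
  else 0.

(* coefficient of x1^a x2^b in Y(u,x1)Y(v,x2)w *)
Definition YuYv (Y : vop) (u v w : hvec) (a b : int) : hvec :=
  Y u (- a - 1) (Y v (- b - 1) w).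

(* coefficient of x1^a x2^b in beta(x2-x1) Y(v,x2) Y(u,x1) w *)
Definition beta_term (beta : lser) (Y : vop) (u v w : hvec) (a b : int) : hvec :=
  hsumZ (fun i : int => hsumZ (fun l : int =>
    hscale (fun j => expc beta false true j l i)
           (Y v (- (b - l) - 1) (Y u (- (a - i) - 1) w)))).

(* coefficient of x1^a x2^b in f(x1-x2) w *)
Definition f_x1mx2 (f : lser) (w : hvec) (a b : int) : hvec :=
  hscale (fun j => expc f false true j a b) w.
(* coefficient of x1^a x2^b in f(-x2+x1) w *)
Definition f_mx2x1 (f : lser) (w : hvec) (a b : int) : hvec :=
  hscale (fun j => expc f true false j b a) w.
(* coefficient of x1^a x2^b in g(x2-x1) w *)
Definition g_x2mx1 (g : lser) (w : hvec) (a b : int) : hvec :=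
  hscale (fun j => expc g false true j b a) w.

(* coefficient of x1^a x2^b in
   sum_r Y(c^(r),x2) 1/r! (d/dx2)^r x1^{-1} delta(x2/x1) w *)
Definition delta_term (Y : vop) (c : nat -> hvec) (w : hvec) (a b : int) : hvec :=
  hsumN (fun r => kscale ((zbin (- a - 1) r)%:~R) (Y (c r) (- a - b - r%:Z - 2) w)).

(* negative part coefficient: f(x)^- has coefficient phi_k (k<0) *)
Definition lcoef (phi : lser) (k : int) : hser := fun j => phi j k.

End HbarAdic.

(* Main.v *)
Require Import Defs.
From mathcomp Require Import all_boot all_order all_algebra.
From mathcomp Require Import reals complex.
From Stdlib Require Import ClassicalEpsilon FunctionalExtensionality.
From mathcomp Require Import zify ring.
Import Order.TTheory GRing.Theory Num.Theory.

Module Helpers.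
Set Implicit Arguments.
Unset Strict Implicit.
Unset Printing Implicit Defensive.
Local Open Scope ring_scope.
Section MX.
Variables (K : fieldType) (W : lmodType K).

Definition mxz (k : nat) (H : int -> int -> W) (a b : int) : W :=
  \sum_(t < k.+1) (('C(k, t)%:R : K) * (-1) ^+ t) *: H (a - (k - t)%:Z) (b - t%:Z).

Definition Dop (H : int -> int -> W) (a b : int) : W := H (a - 1) b - H a (b - 1).

Lemma mxz_ext k H H' a b : (forall a b, H a b = H' a b) -> mxz k H a b = mxz k H' a b.
Proof. by move=> e; apply: eq_bigr => t _; rewrite e. Qed.

Lemma mxzS k H a b : mxz k.+1 H a b = mxz k (Dop H) a b.
Proof.
rewrite /mxz /Dop.
under [RHS]eq_bigr => t _ do rewrite scalerBr.
rewrite sumrB [LHS]big_ord_recl [X in _ = X - _]big_ord_recl /=.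
rewrite /bump /=.
under eq_bigr => t _ do rewrite add1n binS natrD mulrDl scalerDl.
under [X in _ = _ + X - _]eq_bigr => t _ do rewrite add1n.
rewrite big_split /= [X in _ + (X + _)]big_ord_recr /=.
rewrite (@bin_small k k.+1) // mul0r scale0r addr0.
rewrite !bin0 !expr0 !mulr1 !scale1r -!addrA; congr (_ + (_ + _)).
- congr (H _ _); lia.
- apply: eq_bigr => t _; congr (_ *: H _ _); have := ltn_ord t; lia.
- rewrite add0r -sumrN; apply: eq_bigr => t _.
  rewrite exprS mulN1r mulrN scaleNr. congr (- (_ *: H _ _)); lia.
Qed.

Lemma mxz_add k H1 H2 a b :
  mxz k (fun a b => H1 a b + H2 a b) a b = mxz k H1 a b + mxz k H2 a b.
Proof. by rewrite /mxz -big_split; apply: eq_bigr => t _; rewrite scalerDr. Qed.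

Lemma mxz_opp k H a b : mxz k (fun a b => - H a b) a b = - mxz k H a b.
Proof. by rewrite /mxz -sumrN; apply: eq_bigr => t _; rewrite scalerN. Qed.

Lemma mxz0 k H a b : (forall a b, H a b = 0) -> mxz k H a b = 0.
Proof. by move=> e; rewrite /mxz big1 // => t _; rewrite e scaler0. Qed.

Lemma mxz_sum k n (F : 'I_n -> int -> int -> W) a b :
  mxz k (fun a b => \sum_(i < n) F i a b) a b = \sum_(i < n) mxz k (F i) a b.
Proof.
rewrite /mxz exchange_big /=; apply: eq_bigr => t _; by rewrite scaler_sumr.
Qed.

End MX.

Lemma zbin0 n : zbin n 0 = 1.
Proof. by case: n => m /=; rewrite ?bin0 ?addn0 ?binn ?expr0 ?mul1r. Qed.

Lemma zbinS n r : zbin (n + 1) r.+1 = zbin n r.+1 + zbin n r.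
Proof.
case: n => [m|[|m]].
- have -> : Posz m + 1 = Posz m.+1 by lia.
  by rewrite /= binS PoszD.
- have -> : Negz 0 + 1 = Posz 0 by [].
  rewrite /= !add0n !binn exprS bin_small //; ring.
- have -> : Negz m.+1 + 1 = Negz m by rewrite !NegzE; lia.
  rewrite /= (addSn m r) -(addnS m r) addSn binS PoszD exprS; ring.
Qed.

Section Scal.
Variable K : fieldType.

Lemma sgnzS (r : nat) : sgnz K true r.+1 = - sgnz K true r :> K.
Proof. by rewrite /sgnz /=; case: (odd r) => /=; rewrite ?opprK. Qed.

Lemma sgnzB1 (b : int) : sgnz K true (b - 1) = - sgnz K true b :> K.
Proof.
case: b => [[|r]|r].
- by rewrite /sgnz /=.
- have -> : (Posz r.+1 - 1) = Posz r by lia.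
  by rewrite sgnzS opprK.
- have -> : (Negz r - 1) = Negz r.+1 by rewrite !NegzE; lia.
  by rewrite /sgnz /= negbK; case: (odd r); rewrite /= ?opprK.
Qed.

Definition Q12 (a b : int) : K^o :=
  if (0 <= b)%R then (zbin (a + b) `|b|)%:~R * sgnz K true b else 0.
Definition Q21 (a b : int) : K^o :=
  if (0 <= a)%R then (zbin (a + b) `|a|)%:~R * sgnz K true b else 0.

Lemma DQ12 a b : Dop Q12 a b = Q12 a b.
Proof.
rewrite /Dop /Q12; case: b => [[|r]|r].
- by rewrite /= !zbin0 subr0.
- have -> : (Posz r.+1 - 1) = Posz r by lia.
  have -> : a - 1 + Posz r.+1 = a + r by lia.
  have -> : a + Posz r.+1 = a + r + 1 by lia.
  rewrite /= zbinS sgnzS rmorphD /=; ring.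
- have -> : (0 <= Negz r - 1) = false by [].
  by rewrite /= subrr.
Qed.

Lemma DQ21 a b : Dop Q21 a b = Q21 a b.
Proof.
rewrite /Dop /Q21; case: a => [[|r]|r].
- by rewrite /= !zbin0 sgnzB1 sub0r !mul1r opprK.
- have -> : (Posz r.+1 - 1) = Posz r by lia.
  have -> : Posz r + b = Posz r.+1 + (b - 1) by lia.
  have -> : Posz r.+1 + b = Posz r.+1 + (b - 1) + 1 by lia.
  rewrite /= zbinS sgnzB1 rmorphD /=; ring.
- by rewrite /= subrr.
Qed.

Lemma Q12_21 a b : 0 <= a + b -> Q12 a b = Q21 a b.
Proof.
rewrite /Q12 /Q21; case: a => p; case: b => q h.
- rewrite -PoszD /=.
  by rewrite -{2}(addKn p q) bin_sub // leq_addr.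
- have hq : (q < p)%N by move: h; rewrite NegzE; lia.
  have -> : Posz p + Negz q = Posz (p - q.+1) by rewrite NegzE; lia.
  by rewrite /= bin_small ?mulr0z ?mul0r //; lia.
- have hq : (p < q)%N by move: h; rewrite NegzE; lia.
  have -> : Negz p + Posz q = Posz (q - p.+1) by rewrite NegzE; lia.
  by rewrite /= bin_small ?mulr0z ?mul0r //; lia.
- move: h; rewrite !NegzE; lia.
Qed.

Definition Qr (r : nat) (a b : int) : K^o := (zbin (- a - 1) r)%:~R.

Lemma mxz_Q12 k a b : mxz k Q12 a b = Q12 a b.
Proof.
elim: k a b => [|k IH] a b.
- by rewrite /mxz big_ord1 /= bin0 expr0 mulr1 scale1r !subr0.
- by rewrite mxzS -IH; apply: mxz_ext => a' b'; rewrite DQ12.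
Qed.

Lemma mxz_Q21 k a b : mxz k Q21 a b = Q21 a b.
Proof.
elim: k a b => [|k IH] a b.
- by rewrite /mxz big_ord1 /= bin0 expr0 mulr1 scale1r !subr0.
- by rewrite mxzS -IH; apply: mxz_ext => a' b'; rewrite DQ21.
Qed.

Lemma mxz_Qr k r a b : (r < k)%N -> mxz k (Qr r) a b = 0.
Proof.
elim: k r a b => [|k IH] r a b //.
rewrite mxzS ltnS; case: r => [|r] hr.
- by apply: mxz0 => a' b'; rewrite /Dop /Qr !zbin0 subrr.
- rewrite -(IH r a b hr); apply: mxz_ext => a' b'.
  rewrite /Dop /Qr.
  have -> : - (a' - 1) - 1 = (- a' - 1) + 1 by lia.
  rewrite zbinS rmorphD /=; ring.
Qed.
End Scal.

Section Vec.
Variables (K : fieldType) (W : lmodType K).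

Lemma mx_scal k (e : int -> int -> K^o) (h : int -> W) (H : int -> int -> W) a b :
  (forall a b, H a b = e a b *: h (a + b)) ->
  mxz k H a b = (mxz k e a b) *: h (a + b - k%:Z).
Proof.
move=> eH; rewrite /mxz scaler_suml; apply: eq_bigr => t _.
rewrite eH scalerA; congr (_ *: h _).
have := ltn_ord t; lia.
Qed.

End Vec.

Section Hsum.
Variables (K : fieldType) (V0 : lmodType K).

Definition win (s : int -> hvec V0) (N m : nat) : V0 :=
  \sum_(i < N.*2.+1) s (i%:Z - N%:Z) m.
Definition supp (s : int -> hvec V0) (N m : nat) : Prop :=
  forall i : int, (N < `|i|)%N -> s i m = 0.

Lemma supp_le s N N' m : supp s N m -> (N <= N')%N -> supp s N' m.
Proof. by move=> h le i hi; apply: h; lia. Qed.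

Lemma winS s N m : supp s N m -> win s N.+1 m = win s N m.
Proof.
move=> h; rewrite /win doubleS big_ord_recl big_ord_recr /=.
rewrite h; last by lia.
rewrite h; last by rewrite /bump /=; lia.
rewrite add0r addr0; apply: eq_bigr => i _; congr (s _ m).
rewrite /bump /=; lia.
Qed.

Lemma win_le s N N' m : supp s N m -> (N <= N')%N -> win s N' m = win s N m.
Proof.
move=> h; move/subnKC <-; elim: (N' - N)%N => [|d IH]; first by rewrite addn0.
rewrite addnS winS ?IH //; apply: (supp_le h); exact: leq_addr.
Qed.

Lemma hsumZ_win s N m : supp s N m -> hsumZ s m = win s N m.
Proof.
move=> h.
have ex : exists t, (fun t => exists N0 : nat,
     (forall i : int, (N0 < `|i|)%N -> s i m = 0) /\
     t = \sum_(i < N0.*2.+1) s (i%:Z - N0%:Z) m) t.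
  by exists (win s N m); exists N; split.
rewrite /hsumZ; case: (@epsilon_spec V0 (inhabits (0 : V0)) _ ex) => N1 [h1 ->].
rewrite -/(win s N1 m).
rewrite -(@win_le s N1 (maxn N N1)) ?leq_maxr //.
by rewrite (@win_le s N (maxn N N1)) ?leq_maxl.
Qed.

Lemma hsumZ_zero (s : int -> hvec V0) m : (forall i, s i m = 0) -> hsumZ s m = 0.
Proof.
move=> h; rewrite (@hsumZ_win s 0) /win ?big1 // => i _; exact: h.
Qed.

End Hsum.

Lemma lser_unif (K : fieldType) (f : lser K) : is_lser f ->
  forall N, exists M : nat, forall j, (j < N)%N -> forall n : int, n < - M%:Z -> f j n = 0.
Proof.
move=> Hf; elim=> [|N [M1 IH]]; first by exists 0%N.
have [L HL] := Hf N.
exists (M1 + `|L|)%N => j hj n hn.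
rewrite ltnS leq_eqVlt in hj; case/orP: hj => [/eqP -> | hj].
- apply: HL; lia.
- apply: IH => //; lia.
Qed.

Section Modh.
Variables (K : fieldType) (V0 : lmodType K).

Lemma modh_Y (vac : hvec V0) (Y : vop V0) N (x : hvec V0) :
  hNVA vac Y -> modh N x -> forall n w, modh N (Y x n w).
Proof.
move=> [_ [Hsc _]] hx n w.
pose e : hser K := fun j => if j == N then 1 else 0.
pose x' : hvec V0 := fun m => x (m + N)%N.
have ex : x = hscale e x'.
  apply: functional_extensionality => m; rewrite /hscale.
  case: (ltnP m N) => hm.
  - rewrite hx // big1 // => i _; rewrite /e ifF ?scale0r //.
    apply/negbTE; have := ltn_ord i; lia.
  - have hN : (N < m.+1)%N by lia.
    rewrite (bigD1 (Ordinal hN)) //= big1 ?addr0.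
    + by rewrite /e eqxx scale1r /x' subnK.
    + move=> i hi; rewrite /e ifF ?scale0r //; apply/negbTE.
      apply: contra hi => /eqP hi; apply/eqP; exact: val_inj.
rewrite ex Hsc => m hm; rewrite /hscale big1 // => i _.
rewrite /e ifF ?scale0r //; apply/negbTE; have := ltn_ord i; lia.
Qed.

Lemma Y0 (vac : hvec V0) (Y : vop V0) u n : hNVA vac Y -> Y u n (hzero V0) = hzero V0.
Proof.
move=> [_ [_ [Hlin _]]].
have [Hadd _] := Hlin u n.
have e : hadd (hzero V0) (hzero V0) = hzero V0.
  by apply: functional_extensionality => m; rewrite /hadd /hzero addr0.
have := Hadd (hzero V0) (hzero V0); rewrite e => h.
apply: functional_extensionality => m.
have := congr1 (fun F => F m) h; rewrite /hadd /hzero /= => h2.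
by apply: (@addrI _ (Y u n (hzero V0) m)); rewrite addr0 -h2.
Qed.

End Modh.

Section Main.
Variables (K : fieldType) (V0 : lmodType K).

Lemma part2 (vac : hvec V0) (Y : vop V0) (HV : hNVA vac Y)
  (u v : hvec V0) (c : nat -> hvec V0)
  (beta f g : lser K)
  (Hid : forall (w : hvec V0) (a b : int),
     hsub (YuYv Y u v w a b) (beta_term beta Y u v w a b) =
     hadd (hadd (f_x1mx2 f w a b) (g_x2mx1 g w a b)) (delta_term Y c w a b))
  (n : nat) : Y u n%:Z v = hadd (hscale (lcoef f (- n%:Z - 1)) vac) (c n).
Proof.
have HV' := HV; move: HV' => [_ [_ [_ [_ [_ [Hcr _]]]]]].
apply: functional_extensionality => m.
have := congr1 (fun F => F m) (Hid vac (- n%:Z - 1) 0); rewrite /hsub /hadd /=.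
have hY : YuYv Y u v vac (- n%:Z - 1) 0 = Y u n v.
  rewrite /YuYv; have -> : - (- n%:Z - 1) - 1 = n%:Z by lia.
  by have -> : - (0:int) - 1 = -1 by []; rewrite (proj1 (Hcr v)).
have hB : beta_term beta Y u v vac (- n%:Z - 1) 0 m = 0.
  rewrite /beta_term; apply: hsumZ_zero => i; apply: hsumZ_zero => l.
  rewrite /hscale; apply: big1 => j _; rewrite /expc; case: ifP => hi.
  - rewrite (proj2 (Hcr u)); last by lia.
    by rewrite (Y0 _ _ HV) /hzero scaler0.
  - by rewrite scale0r.
have hF : f_x1mx2 f vac (- n%:Z - 1) 0 m = hscale (lcoef f (- n%:Z - 1)) vac m.
  rewrite /f_x1mx2 /hscale; apply: eq_bigr => j _.
  by rewrite /expc /lcoef /= addr0 zbin0 /sgnz /= !mulr1.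
have hG : g_x2mx1 g vac (- n%:Z - 1) 0 m = 0.
  rewrite /g_x2mx1 /hscale big1 // => j _; rewrite /expc ifF ?scale0r //; lia.
have hD : delta_term Y c vac (- n%:Z - 1) 0 m = c n m.
  rewrite /delta_term /hsumN (@hsumZ_win _ _ _ n).
  - rewrite /win big_ord_recr /= big1 ?add0r.
    + have -> : (n.*2)%:Z - n%:Z = Posz n by rewrite -addnn; lia.
      have -> : - (- n%:Z - 1) - 1 = Posz n by lia.
      have -> : - (- n%:Z - 1) - 0 - n%:Z - 2 = -1 by lia.
      by rewrite /kscale /= binn scale1r (proj1 (Hcr (c n))).
    + move=> i _; case E: (Posz i - Posz n) => [r|r] //=.
      rewrite /kscale (proj2 (Hcr (c r))) ?scaler0 //.
      have hi := ltn_ord i; move: hi E; move: (nat_of_ord i) => j; rewrite -addnn => hi E; lia.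
  - move=> i; case: i => [r|r] hi //=.
    have -> : - (- n%:Z - 1) - 1 = Posz n by lia.
    by rewrite /kscale /= bin_small // mulr0z scale0r.
rewrite hY hB hF hG hD subr0 addr0 => ->; by [].
Qed.

End Main.

Lemma zlem (Z : zmodType) (x b f12 f21 g d : Z) :
  x - b = f12 + g + d -> x = b + f21 + g + (f12 - f21 + d).
Proof.
move=> e; rewrite -(subrK b x) e.
rewrite [RHS]addrC -!addrA; congr (_ + _).
rewrite (addrC f21 g) (addrA b g f21) (addrA d) [RHS]addrC addrK.
by rewrite addrC -addrA.
Qed.

Section Main1.
Variables (K : fieldType) (V0 : lmodType K).

Lemma mul_x12E k (H : int -> int -> hvec V0) a b m :
  mul_x12 k H a b m = mxz k (fun a' b' => H a' b' m) a b.
Proof. by []. Qed.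

Lemma part1 (vac : hvec V0) (Y : vop V0) (HV : hNVA vac Y)
  (u v : hvec V0) (c : nat -> hvec V0) (Hc : hlim0 c)
  (beta f g : lser K) (Hf : is_lser f)
  (Hid : forall (w : hvec V0) (a b : int),
     hsub (YuYv Y u v w a b) (beta_term beta Y u v w a b) =
     hadd (hadd (f_x1mx2 f w a b) (g_x2mx1 g w a b)) (delta_term Y c w a b)) :
  (forall N : nat, exists k : nat, forall (w : hvec V0) (a b : int),
     hcong N (mul_x12 k (YuYv Y u v w) a b)
             (mul_x12 k (fun a' b' => hadd (hadd (beta_term beta Y u v w a' b')
                                                 (f_mx2x1 f w a' b'))
                                           (g_x2mx1 g w a' b')) a b)).
Proof.
move=> N; have [r0 Hr0] := Hc N; have [M HM] := lser_unif Hf N.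
exists (r0 + M)%N => w a b m hm.
rewrite !mul_x12E.
have key : forall a' b', YuYv Y u v w a' b' m =
   hadd (hadd (beta_term beta Y u v w a' b') (f_mx2x1 f w a' b')) (g_x2mx1 g w a' b') m +
   ((f_x1mx2 f w a' b' m - f_mx2x1 f w a' b' m) + delta_term Y c w a' b' m).
  move=> a' b'; have := congr1 (fun F => F m) (Hid w a' b'); rewrite /hsub /hadd /=.
  exact: zlem.
rewrite (mxz_ext _ _ _ key) mxz_add -[RHS]addr0; congr (_ + _).
rewrite mxz_add -[RHS]addr0; congr (_ + _).
- have eF : forall a' b', f_x1mx2 f w a' b' m - f_mx2x1 f w a' b' m =
     \sum_(j < m.+1) (Q12 K a' b' - Q21 K a' b') *: (f j (a' + b') *: w (m - j)%N).
    move=> a' b'; rewrite /f_x1mx2 /f_mx2x1 /hscale -sumrB; apply: eq_bigr => j _.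
    rewrite -scalerBl scalerA; congr (_ *: _).
    rewrite /expc /Q12 /Q21 /sgnz /= (addrC b' a').
    by case: (0 <= b'); case: (0 <= a'); rewrite /=; ring.
  rewrite (mxz_ext _ _ _ eF) mxz_sum; apply: big1 => j _.
  rewrite (@mx_scal _ _ _ (fun a b => Q12 K a b - Q21 K a b) (fun s => f j s *: w (m - j)%N)) //.
  rewrite mxz_add mxz_opp mxz_Q12 mxz_Q21.
  case: (lerP 0 (a + b)) => hab.
  + by rewrite Q12_21 // subrr scale0r.
  + rewrite HM ?scale0r ?scaler0 //; first by have := ltn_ord j; lia.
    lia.
- have eD : forall a' b', delta_term Y c w a' b' m =
     \sum_(i < r0.*2.+1) (match (i%:Z - r0%:Z) with
        | Posz r => kscale ((zbin (- a' - 1) r)%:~R) (Y (c r) (- a' - b' - r%:Z - 2) w)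
        | Negz _ => hzero V0 end) m.
    move=> a' b'; rewrite /delta_term /hsumN (@hsumZ_win _ _ _ r0) //.
    move=> [r|r] hi //=.
    rewrite /kscale (@modh_Y _ _ vac Y N (c r) HV (Hr0 r _) _ w m hm) ?scaler0 //; lia.
  rewrite (mxz_ext _ _ _ eD) mxz_sum; apply: big1 => i _.
  case: (i%:Z - r0%:Z) => [r|r]; last by apply: mxz0.
  rewrite (@mx_scal _ _ _ (Qr K r) (fun s => Y (c r) (- s - r%:Z - 2) w m)); last first.
    by move=> a' b'; rewrite /kscale /Qr; congr (_ *: Y _ _ _ _); lia.
  case: (ltnP r (r0 + M)) => hr.
  + by rewrite mxz_Qr // scale0r.
  + rewrite (@modh_Y _ _ vac Y N (c r) HV (Hr0 r _) _ w m hm) ?scaler0 //; lia.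
Qed.

End Main1.

End Helpers.

Local Open Scope ring_scope.
Local Open Scope complex_scope.

Theorem lemma3p37 (R : realType) (V0 : lmodType R[i])
  (vac : hvec V0) (Y : vop V0) (HV : hNVA vac Y)
  (u v : hvec V0) (c : nat -> hvec V0) (Hc : hlim0 c)
  (beta f g : lser R[i])
  (Hbeta : is_lser beta) (Hf : is_lser f) (Hg : is_lser g)
  (Hid : forall (w : hvec V0) (a b : int),
     hsub (YuYv Y u v w a b) (beta_term beta Y u v w a b) =
     hadd (hadd (f_x1mx2 f w a b) (g_x2mx1 g w a b)) (delta_term Y c w a b)) :
  (forall N : nat, exists k : nat, forall (w : hvec V0) (a b : int),
     hcong N (mul_x12 k (YuYv Y u v w) a b)
             (mul_x12 k (fun a' b' => hadd (hadd (beta_term beta Y u v w a' b')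
                                                 (f_mx2x1 f w a' b'))
                                           (g_x2mx1 g w a' b')) a b)) /\
  (forall n : nat, Y u n%:Z v = hadd (hscale (lcoef f (- n%:Z - 1)) vac) (c n)).
Proof.
split.
- exact: (Helpers.part1 HV Hc Hf Hid).
- exact: (Helpers.part2 HV Hid).
Qed.
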